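(* Let $\mathcal I,\mathcal J$ be ideals on $\omega$. Then (1) $\mathfrak b_s(\mathcal I\otimes\mathcal J)=\mathfrak b_s(\mathcal I)$; (2) $\mathfrak b_\sigma(\mathcal I\otimes\mathcal J)=\min\{\mathfrak b_\sigma(\mathcal I),\mathfrak b_\sigma(\mathcal J)\}$; (3) $\mathrm{add}_\omega(\mathcal I\otimes\mathcal J)\le\min\{\mathrm{add}_\omega(\mathcal I),\mathrm{add}_\omega(\mathcal J)\}$.
   Context: An ideal on a countably infinite set $S$ is a family of subsets of $S$ closed under finite unions and subsets, containing all finite sets, not containing $S$. $\mathcal I\otimes\mathcal J=\{A\subseteq\omega\times\omega:\{x\in\omega:\{y:(x,y)\in A\}\notin\mathcal J\}\in\mathcal I\}$, an ideal on $\omega\times\omega$. Convention: $\min\emptyset=\infty$, $\kappa<\infty$ for every cardinal. For an ideal $\mathcal I$ on a countably infinite set $S$: $\widehat{\mathcal P}_{\mathcal I}$ = sequences $(A_n)_{n\in\omega}\in\mathcal I^\omega$ of pairwise disjoint sets; $\mathcal P_{\mathcal I}$ = those with $\bigcup_nA_n=S$; $\mathcal M_{\mathcal I}$ = sequences $(E_k)_{k\in\omega}\in\mathcal I^\omega$ with $E_k\subseteq E_{k+1}$. $\mathfrak b_s(\mathcal I)=\min\{|\mathcal E|:\mathcal E\subseteq\widehat{\mathcal P}_{\mathcal I}$ and for every $(A_n)\in\mathcal P_{\mathcal I}$ there is $(E_n)\in\mathcal E$ with $\bigcup_n(A_{n+1}\cap\bigcup_{i\le n}E_i)\notin\mathcal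 I\}$; $\mathfrak b_\sigma(\mathcal I)=\min\{|\mathcal E|:\mathcal E\subseteq\mathcal M_{\mathcal I}$ and for every $(A_n)\in\mathcal M_{\mathcal I}$ there is $(E_n)\in\mathcal E$ with $E_n\not\subseteq A_n$ for infinitely many $n\}$; $\mathrm{add}_\omega(\mathcal I)=\min\{|\mathcal A|:\mathcal A\subseteq\mathcal I$ and for every $(B_n)\in\mathcal I^\omega$ there is $A\in\mathcal A$ with $A\not\subseteq B_n$ for all $n\}$. *)

(* Defs.v *)
From mathcomp Require Import all_boot all_order.
From mathcomp Require Import boolp classical_sets functions cardinality.
Set Implicit Arguments. Unset Strict Implicit. Unset Printing Implicit Defensive.
Local Open Scope classical_set_scope.

Definition ideal (S : Type) (I : set (set S)) : Prop :=
  (forall A B, I A -> I B -> I (A `|` B)) /\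
  (forall A B, B `<=` A -> I A -> I B) /\
  (forall A, finite_set A -> I A) /\
  ~ I setT.

Definition ideal_prod (I J : set (set nat)) : set (set (nat * nat)) :=
  [set A | I [set x | ~ J [set y | A (x, y)]]].

Definition Phat (S : Type) (I : set (set S)) : set (nat -> set S) :=
  [set A | (forall n, I (A n)) /\
           (forall n m, n <> m -> A n `&` A m = set0)].

Definition Ppart (S : Type) (I : set (set S)) : set (nat -> set S) :=
  [set A | Phat I A /\ \bigcup_n A n = setT].

Definition Mseq (S : Type) (I : set (set S)) : set (nat -> set S) :=
  [set E | (forall k, I (E k)) /\ (forall k, E k `<=` E k.+1)].

Definition bs_fam (S : Type) (I : set (set S)) (F : set (nat -> set S)) : Prop :=
  F `<=` Phat I /\
  forall A, Ppart I A ->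
    exists2 E, F E &
      ~ I (\bigcup_n (A n.+1 `&` \bigcup_(i in [set i | (i <= n)%N]) E i)).

Definition bsigma_fam (S : Type) (I : set (set S)) (F : set (nat -> set S)) : Prop :=
  F `<=` Mseq I /\
  forall A, Mseq I A ->
    exists2 E, F E & forall m, exists n, (m <= n)%N /\ ~ (E n `<=` A n).

Definition addw_fam (S : Type) (I : set (set S)) (F : set (set S)) : Prop :=
  F `<=` I /\
  forall B : nat -> set S, (forall n, I (B n)) ->
    exists2 A, F A & forall n, ~ (A `<=` B n).

(* Comparison of cardinal minima, with min(empty) = infinity above all
   cardinals:  inv_le P Q  <->  min{|F| : P F} <= min{|G| : Q G}. *)
Definition inv_le (X Y : Type) (P : set X -> Prop) (Q : set Y -> Prop) : Prop :=
  forall G : set Y, Q G -> exists2 F : set X, P F & card_le F G.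

Definition inv_le_min (X Y Z : Type) (P : set X -> Prop)
  (Q1 : set Y -> Prop) (Q2 : set Z -> Prop) : Prop :=
  inv_le P Q1 /\ inv_le P Q2.

(* min( min{|F| : P1 F}, min{|F| : P2 F} ) <= min{|G| : Q G}. *)
Definition min_inv_le (X Y Z : Type) (P1 : set X -> Prop) (P2 : set Y -> Prop)
  (Q : set Z -> Prop) : Prop :=
  forall G : set Z, Q G ->
    (exists2 F : set X, P1 F & card_le F G) \/
    (exists2 F : set Y, P2 F & card_le F G).

(* Main.v *)
Require Import Defs.
From mathcomp Require Import all_boot all_order.
From mathcomp Require Import boolp classical_sets functions cardinality.
From Stdlib Require Import Classical_Prop.
Set Implicit Arguments. Unset Strict Implicit. Unset Printing Implicit Defensive.
Local Open Scope classical_set_scope.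

Section Aux.
Variable S : Type.
Variable K : set (set S).
Hypothesis hK : ideal K.

Lemma id_sub A B : B `<=` A -> K A -> K B.
Proof. by case: hK => _ [h _]; apply: h. Qed.

Lemma id_U A B : K A -> K B -> K (A `|` B).
Proof. by case: hK => h _; apply: h. Qed.

Lemma id_0 : K set0.
Proof. by case: hK => _ [_ [h _]]; apply: h; exact: finite_set0. Qed.

Lemma id_1 x : K [set x].
Proof. by case: hK => _ [_ [h _]]; apply: h; exact: finite_set1. Qed.

Lemma id_T : ~ K setT.
Proof. by case: hK => _ [_ [_ h]]. Qed.

Lemma id_bigU (P : nat -> set S) k :
  (forall i, (i <= k)%N -> K (P i)) -> K [set y | exists i, (i <= k)%N /\ P i y].
Proof.
elim: k => [|k IH] H.
  apply: (id_sub _ (H 0 (leqnn 0))) => y [i [/[!leqn0] /eqP -> //]].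
apply: (id_sub (A := [set y | exists i, (i <= k)%N /\ P i y] `|` P k.+1)).
  move=> y [i [hi Pi]]; rewrite leq_eqVlt in hi; case/orP: hi => [/eqP <-|hi].
    by right.
  by left; exists i.
apply: id_U; last exact: H.
by apply: IH => i hi; apply: H; apply: leqW.
Qed.

Lemma id_notT A : K A -> exists x, ~ A x.
Proof.
move=> KA; apply: NNPP => hn; apply: id_T; apply: (id_sub (A := A)) => // x _.
by apply: NNPP => nx; apply: hn; exists x.
Qed.

End Aux.

Lemma mono_le (T : Type) (E : nat -> set T) :
  (forall k, E k `<=` E k.+1) -> forall m n, (m <= n)%N -> E m `<=` E n.
Proof.
move=> h m n mn; elim: n mn => [|n IH]; first by rewrite leqn0 => /eqP ->.
rewrite leq_eqVlt => /orP [/eqP -> //|mn].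
by move=> x /(IH mn) /h.
Qed.

Lemma prodT I J (A : set nat) : ideal I -> ideal J -> I A ->
  ideal_prod I J [set p | A p.1].
Proof.
move=> hI hJ IA; rewrite /ideal_prod /=.
apply: (id_sub hI (A := A)) => // x /= nJ; apply: NNPP => nA; apply: nJ.
by apply: (id_sub hJ (A := set0)) => //; exact: id_0.
Qed.

Lemma prod2 I J (A : set nat) : ideal I -> ideal J -> J A ->
  ideal_prod I J [set p | A p.2].
Proof.
move=> hI hJ JA; rewrite /ideal_prod /=.
apply: (id_sub hI (A := set0)); last exact: id_0.
by move=> x /= [].
Qed.

Lemma least_ex (P : nat -> Prop) x : P x -> exists k, P k /\ forall j, (j < k)%N -> ~ P j.
Proof.
move=> Px.
have ex : exists n, (fun n => `[< P n >]) n by exists x; apply/asboolP.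
case: (ex_minnP ex) => m /asboolP Pm minm; exists m; split => // j jm Pj.
have := minm j (asboolT Pj); rewrite leqNgt jm //.
Qed.

Lemma p1a I J : ideal I -> ideal J ->
  inv_le (bs_fam (ideal_prod I J)) (bs_fam I).
Proof.
move=> hI hJ G [GI HG].
exists ((fun E n => [set p : nat * nat | E n p.1]) @` G); last exact: card_image_le.
split.
  move=> _ [E GE <-]; have [EI Edisj] := GI E GE; split.
    by move=> k; apply: prodT => //.
  move=> n m nm; apply/seteqP; split => p //= [a b].
  have : (E n `&` E m) p.1 by split.
  by rewrite Edisj.
move=> A [[AI Adisj] Acov].
have cov : forall p, exists j, A j p.
  by move=> p; have : (setT : set (nat * nat)) p by []; rewrite -Acov => -[j _ Aj]; exists j.
pose col k x := [set y | exists j, (j <= k)%N /\ A j (x, y)].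
have hpsi : forall x, exists k, (k = x \/ ~ J (col k x)) /\
    forall j, (j < k)%N -> ~ (j = x \/ ~ J (col j x)).
  by move=> x; apply: least_ex; left.
have [psi Hpsi] := choice hpsi.
pose A' k := [set x | psi x = k].
have hA' : Ppart I A'.
  split; last by apply/seteqP; split => // x _; exists (psi x).
  split.
    move=> k; apply: (id_sub hI (A := [set k] `|` [set x | ~ J [set y | A k (x, y)]])); last first.
      by apply: id_U => //; [exact: id_1|exact: AI].
    move=> x /= psik; have [[e|nJ] minx] := Hpsi x; first by left; rewrite -psik e.
    right => JA; apply: nJ; rewrite psik.
    case: k psik JA => [|k] psik JA.
      by apply: (id_sub hJ _ JA) => y [j [/[!leqn0] /eqP -> //]].
    have : ~ (k = x \/ ~ J (col k x)) by apply: minx; rewrite psik.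
    move=> /not_or_and [_ /NNPP Jk].
    apply: (id_sub hJ (A := col k x `|` [set y | A k.+1 (x, y)])); last exact: id_U.
    move=> y [j [jk Aj]]; rewrite leq_eqVlt in jk; case/orP: jk => [/eqP e|jk].
      by right; rewrite -e.
    by left; exists j.
  move=> n m nm; apply/seteqP; split => x //= [e1 e2]; apply: nm; by rewrite -e1 -e2.
have [E GE HE] := HG _ hA'.
exists (fun n => [set p | E n p.1]); first by exists E.
move=> IS; apply: HE; apply: (id_sub hI _ IS).
move=> x [n _ [/= psin [i /= hi Ei]]] JS.
have [_ minx] := Hpsi x.
have : ~ (n = x \/ ~ J (col n x)) by apply: minx; rewrite psin.
move=> /not_or_and [_ /NNPP Jn].
apply: (id_T hJ); apply: (id_sub hJ (A := _ `|` col n x)); last exact: (id_U hJ JS Jn).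
move=> y _; have [j Aj] := cov (x, y).
case: (leqP j n) => jn; first by right; exists j.
left; case: j jn Aj => [//|j] jn Aj.
by exists j => //; split => //; exists i => //=; apply: leq_trans hi _.
Qed.

Lemma p1b I J : ideal I -> ideal J ->
  inv_le (bs_fam I) (bs_fam (ideal_prod I J)).
Proof.
move=> hI hJ G [GI HG].
pose EI (E : nat -> set (nat * nat)) i := [set x | ~ J [set y | E i (x, y)]].
pose E' E i := [set x | EI E i x /\ forall j, (j < i)%N -> ~ EI E j x].
exists ((fun E => E' E) @` G); last exact: card_image_le.
split.
  move=> _ [E GE <-]; have [EI' Edisj] := GI E GE; split.
    move=> k; apply: (id_sub hI (A := EI E k)); last exact: EI'.
    by move=> x [].
  move=> n m nm; apply/seteqP; split => x //= [[a1 a2] [b1 b2]].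
  case: (ltngtP n m) => [nm'|mn'|e]; last by apply: nm.
    exact: (b2 n nm' a1).
  exact: (a2 m mn' b1).
move=> A [[AI Adisj] Acov].
have hA'' : Ppart (ideal_prod I J) (fun n => [set p | A n p.1]).
  split; last first.
    apply/seteqP; split => // p _.
    have [j _ Aj] : (\bigcup_n A n) p.1 by rewrite Acov.
    by exists j.
  split; first by move=> k; apply: prodT => //.
  move=> n m nm; apply/seteqP; split => p //= [a b].
  have : (A n `&` A m) p.1 by split.
  by rewrite Adisj.
have [E GE HE] := HG _ hA''.
exists (E' E); first by exists E.
move=> IW; apply: HE; apply: (id_sub hI _ IW).
move=> x /= nJ.
have [y Sy] : exists y, (\bigcup_n ([set p | A n.+1 p.1] `&`
      \bigcup_(i in [set i | (i <= n)%N]) E i)) (x, y).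
  apply: NNPP => hn; apply: nJ; apply: (id_sub hJ _ (id_0 hJ)) => y Sy.
  by apply: hn; exists y.
case: Sy => n _ [/= An [i /= hi Ei]].
have hsub : [set y | (\bigcup_n ([set p | A n.+1 p.1] `&`
      \bigcup_(i in [set i | (i <= n)%N]) E i)) (x, y)]
      `<=` [set y | exists i, (i <= n)%N /\ E i (x, y)].
  move=> y' [n' _ [/= An' [i' /= hi' Ei']]].
  have nn : n' = n.
    apply: NNPP => ne.
    have : (A n'.+1 `&` A n.+1) x by split.
    by rewrite Adisj // => -[].
  by exists i'; split => //; rewrite -nn.
have : exists i, (i <= n)%N /\ EI E i x.
  apply: NNPP => hn; apply: nJ; apply: (id_sub hJ hsub).
  apply: id_bigU => // j jn; apply: NNPP => nJj; apply: hn.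
  by exists j.
move=> [j [jn EIj]].
have [i0 [EI0 min0]] := least_ex (P := fun i => EI E i x) EIj.
exists n => //; split => //; exists i0; last exact: (conj EI0 min0).
rewrite /=; apply: leq_trans jn; rewrite leqNgt; apply/negP => ji0.
exact: (min0 j ji0 EIj).
Qed.

Lemma p2a I J : ideal I -> ideal J ->
  inv_le (bsigma_fam (ideal_prod I J)) (bsigma_fam I).
Proof.
move=> hI hJ G [GI HG].
exists ((fun E n => [set p : nat * nat | E n p.1]) @` G); last exact: card_image_le.
split.
  move=> _ [E GE <-]; have [EI Einc] := GI E GE; split.
    by move=> k; apply: prodT => //.
  by move=> k p /= /Einc.
move=> A [AI Ainc].
have hA' : Mseq I (fun n => [set x | ~ J [set y | A n (x, y)]]).
  split; first exact: AI.
  move=> k x /= nJ JJ; apply: nJ; apply: (id_sub hJ _ JJ) => y.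
  exact: Ainc.
have [E GE HE] := HG _ hA'.
exists (fun n => [set p | E n p.1]); first by exists E.
move=> m; have [n [mn Hn]] := HE m; exists n; split => // Hsub.
apply: Hn => x Ex Jx.
apply: (id_T hJ); apply: (id_sub hJ _ Jx) => y _.
exact: (Hsub (x, y) Ex).
Qed.

Lemma p2b I J : ideal I -> ideal J ->
  inv_le (bsigma_fam (ideal_prod I J)) (bsigma_fam J).
Proof.
move=> hI hJ G [GJ HG].
exists ((fun E n => [set p : nat * nat | E n p.2]) @` G); last exact: card_image_le.
split.
  move=> _ [E GE <-]; have [EJ Einc] := GJ E GE; split.
    by move=> k; apply: prod2 => //.
  by move=> k p /= /Einc.
move=> A [AI Ainc].
have hx : forall n, exists x, J [set y | A n (x, y)].
  move=> n; have [x hx] := id_notT hI (AI n).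
  by exists x; apply: NNPP.
have [xs Hxs] := choice hx.
have hA' : Mseq J (fun n => [set y | exists k, (k <= n)%N /\ A k (xs k, y)]).
  split.
    by move=> k; apply: id_bigU => // i _; apply: Hxs.
  by move=> k y /= [i [ik Ai]]; exists i; split => //; apply: leqW.
have [E GE HE] := HG _ hA'.
exists (fun n => [set p | E n p.2]); first by exists E.
move=> m; have [n [mn Hn]] := HE m; exists n; split => // Hsub.
apply: Hn => y Ey; exists n; split => //.
exact: (Hsub (xs n, y) Ey).
Qed.

Lemma not_bsigma (S T : Type) (K : set (set S)) (G : set T) (f : T -> nat -> set S) :
  (forall E, G E -> Mseq K (f E)) ->
  ~ bsigma_fam K (f @` G) ->
  exists A, Mseq K A /\ forall E, G E -> exists N, forall n, (N <= n)%N -> f E n `<=` A n.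
Proof.
move=> hM hn; apply: NNPP => hA; apply: hn; split.
  by move=> _ [E GE <-]; apply: hM.
move=> A MA; apply: NNPP => hno; apply: hA; exists A; split => // E GE.
apply: NNPP => hN; apply: hno; exists (f E); first by exists E.
move=> m; apply: NNPP => hm; apply: hN; exists m => n mn.
apply: NNPP => hs; apply: hm; exists n; split => //.
Qed.

Lemma p2c I J : ideal I -> ideal J ->
  min_inv_le (bsigma_fam I) (bsigma_fam J) (bsigma_fam (ideal_prod I J)).
Proof.
move=> hI hJ G [GM HG].
apply: NNPP => /not_or_and [nI nJ].
pose EI (E : nat -> set (nat * nat)) n := [set x | ~ J [set y | E n (x, y)]].
have [A [[AI Ainc] HA]] : exists A, Mseq I A /\
    forall E, G E -> exists N, forall n, (N <= n)%N -> EI E n `<=` A n.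
  apply: (not_bsigma (f := EI)).
    move=> E GE; have [EM Einc] := GM E GE; split; first exact: EM.
    move=> k x /= nJx JJ; apply: nJx; apply: (id_sub hJ _ JJ) => y.
    exact: Einc.
  by move=> h; apply: nI; exists (EI @` G) => //; exact: card_image_le.
have hN : forall E, exists N, G E -> forall n, (N <= n)%N -> EI E n `<=` A n.
  move=> E; case: (classic (G E)) => [GE|nGE]; last by exists 0.
  by have [N HN] := HA E GE; exists N.
have [N HN] := choice hN.
pose D (E : nat -> set (nat * nat)) k := [set y | exists n, (n <= k)%N /\
   exists x, (x <= k)%N /\ ((N E <= n)%N /\ ~ A n x /\ E n (x, y))].
have [B [[BJ Binc] HB]] : exists B, Mseq J B /\
    forall E, G E -> exists M, forall n, (M <= n)%N -> D E n `<=` B n.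
  apply: (not_bsigma (f := D)).
    move=> E GE; split.
      move=> k; apply: id_bigU => // n nk; apply: id_bigU => // x xk.
      case: (classic ((N E <= n)%N /\ ~ A n x)) => [[Nn nA]|hn].
        apply: (id_sub hJ (A := [set y | E n (x, y)])); first by move=> y [_ [_ ?]].
        apply: NNPP => nJc; apply: nA; apply: (HN E GE n Nn); exact: nJc.
      apply: (id_sub hJ (A := set0)); last exact: id_0.
      by move=> y [h1 [h2 _]]; apply: hn.
    move=> k y [n [nk hx]]; exists n; split; first exact: leqW.
    by case: hx => x [xk hx]; exists x; split => //; apply: leqW.
  by move=> h; apply: nJ; exists (D @` G) => //; exact: card_image_le.
have hM : forall E, exists M, G E -> forall n, (M <= n)%N -> D E n `<=` B n.
  move=> E; case: (classic (G E)) => [GE|nGE]; last by exists 0.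
  by have [M HM] := HB E GE; exists M.
have [M HM] := choice hM.
pose C n := [set p : nat * nat | A n p.1 \/ B (maxn n p.1) p.2].
have MC : Mseq (ideal_prod I J) C.
  split.
    move=> n; rewrite /ideal_prod /=; apply: (id_sub hI _ (AI n)) => x /= nJx.
    apply: NNPP => nA; apply: nJx.
    apply: (id_sub hJ (A := B (maxn n x))); last exact: BJ.
    by move=> y [].
  move=> n [x y] /= [Ax|Bx]; first by left; apply: Ainc.
  right; apply: (mono_le Binc _ Bx).
  by rewrite geq_max !leq_max leqnSn leqnn orbT.
have [E GE HE] := HG C MC.
have [n [mn Hn]] := HE (maxn (N E) (M E)).
apply: Hn => -[x y] Exy /=.
rewrite geq_max in mn; case/andP: mn => Nn Mn.
case: (classic (A n x)) => [Ax|nAx]; first by left.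
right; apply: (HM E GE (maxn n x)).
  by apply: leq_trans Mn _; rewrite leq_maxl.
exists n; split; first by rewrite leq_maxl.
by exists x; split; first by rewrite leq_maxr.
Qed.

Lemma p3a I J : ideal I -> ideal J ->
  inv_le (addw_fam (ideal_prod I J)) (addw_fam I).
Proof.
move=> hI hJ G [GI HG].
exists ((fun A => [set p : nat * nat | A p.1]) @` G); last exact: card_image_le.
split.
  by move=> _ [A GA <-]; apply: prodT => //; apply: GI.
move=> B HB.
have [A GA HA] := HG (fun n => [set x | ~ J [set y | B n (x, y)]]) HB.
exists [set p | A p.1]; first by exists A.
move=> n Hsub; apply: (HA n) => x Ax Jx.
apply: (id_T hJ); apply: (id_sub hJ _ Jx) => y _.
exact: (Hsub (x, y) Ax).
Qed.

Lemma p3b I J : ideal I -> ideal J ->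
  inv_le (addw_fam (ideal_prod I J)) (addw_fam J).
Proof.
move=> hI hJ G [GJ HG].
exists ((fun A => [set p : nat * nat | A p.2]) @` G); last exact: card_image_le.
split.
  by move=> _ [A GA <-]; apply: prod2 => //; apply: GJ.
move=> B HB.
have hx : forall n, exists x, J [set y | B n (x, y)].
  move=> n; have [x hx] := id_notT hI (HB n).
  by exists x; apply: NNPP.
have [xs Hxs] := choice hx.
have [A GA HA] := HG (fun n => [set y | B n (xs n, y)]) Hxs.
exists [set p | A p.2]; first by exists A.
move=> n Hsub; apply: (HA n) => y Ay.
exact: (Hsub (xs n, y) Ay).
Qed.

Theorem theorem5p13 (I J : set (set nat)) :
  ideal I -> ideal J ->
  (* (1) b_s(I (x) J) = b_s(I) *)
  (inv_le (bs_fam (ideal_prod I J)) (bs_fam I) /\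
   inv_le (bs_fam I) (bs_fam (ideal_prod I J))) /\
  (* (2) b_sigma(I (x) J) = min{b_sigma(I), b_sigma(J)} *)
  (inv_le_min (bsigma_fam (ideal_prod I J)) (bsigma_fam I) (bsigma_fam J) /\
   min_inv_le (bsigma_fam I) (bsigma_fam J) (bsigma_fam (ideal_prod I J))) /\
  (* (3) add_omega(I (x) J) <= min{add_omega(I), add_omega(J)} *)
  inv_le_min (addw_fam (ideal_prod I J)) (addw_fam I) (addw_fam J).
Proof.
move=> hI hJ.
split; first by split; [exact: p1a|exact: p1b].
split; first by split; [split; [exact: p2a|exact: p2b]|exact: p2c].
by split; [exact: p3a|exact: p3b].
Qed.
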